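(* Let $\sigma>0$, $\tau_m>0$, and let $\vec X^m\in\underline{V}^h$ be a parameterization of the polygonal curve network $\Gamma^m$ such that assumptions $(\mathcal A)$, $(\mathcal A_1)$ and $(\mathcal A_2)$ below hold. Let $F^m\in W^h$ be given (in the paper $F^m_i(q^i_j)=\lambda[(u_0(\vec X^m_i(q^i_j))-c^m_{k^+(i)})^2-(u_0(\vec X^m_i(q^i_j))-c^m_{k^-(i)})^2]$, but any element of $W^h$ is allowed). Then there exists a unique pair $(\delta\vec X^{m+1},\kappa_{\mathcal M}^{m+1})\in\underline{V}^h_\Phi\times W^h$ such that $$\Big\langle \tfrac{\delta\vec X^{m+1}}{\tau_m},\,\chi\,\vec\omega^m_{\mathcal M}\Big\rangle^h_m-\sigma\,\langle\kappa^{m+1}_{\mathcal M},\chi\rangle^h_m=\langle F^m,\chi\rangle^h_m\quad\forall\chi\in W^h,$$ $$\langle\kappa^{m+1}_{\mathcal M}\,\vec\omega^m_{\mathcal M},\vec\eta\rangle^h_m+\langle\nabla_s\delta\vec X^{m+1},\nabla_s\vec\eta\rangle_m=-\langle\nabla_s\vec X^m,\nabla_s\vec\eta\rangle_m\quad\forall\vec\eta\in\underline{V}^h_\Phi.$$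
   Context: Let $\Phi\in C^2(\mathbb R^3,\mathbb R)$ and $\mathcal M=\{\vec z:\Phi(\vec z)=0\}$ with $\nabla\Phi\neq0$ on $\mathcal M$; set $\vec n_\Phi=\nabla\Phi/\|\nabla\Phi\|$. Curve network: $N_C$ curves $\Gamma_1,\dots,\Gamma_{N_C}$, each parameterized over $I_i=[0,1]$ with a partition $0=q^i_0<q^i_1<\dots<q^i_{N_i}=1$. A curve is either closed (then $I_i$ is periodic, indices are taken modulo $N_i$, i.e. $N_i\equiv 0$, $N_i+1\equiv1$, $-1\equiv N_i-1$, and $j_0^i:=1$) or open (then $j_0^i:=0$). There are $N_T$ triple junctions; for each $k=1,\dots,N_T$ there are three pairwise distinct curve indices $i_{k,1},i_{k,2},i_{k,3}$ (open curves) and endpoints $\rho_{k,l}\in\{0,1\}$, with node index $j_{k,l}\in\{0,N_{i_{k,l}}\}$ satisfying $q^{i_{k,l}}_{j_{k,l}}=\rho_{k,l}$. Every endpoint of every open curve belongs to some triple junction. Spaces: $W^h$ is the set of $(\eta_1,\dots,\eta_{N_C})$ with $\eta_i\in C(I_i,\mathbb R)$ affine on each $[q^i_{j-1},q^i_j]$. $\underline V^h$ is the set of $(\vec\eta_1,\dots,\vec\eta_{N_C})$ with $\vec\eta_i\in C(I_i,\mathbb R^3)$ affine on each $[q^i_{j-1},q^i_j]$ and $\vec\eta_{i_{k,1}}(\rho_{k,1})=\vec\eta_{i_{k,2}}(\rho_{k,2})=\vec\eta_{i_{k,3}}(\rho_{k,3})$ for all $k$. $\vec X^m=(\vec X^m_1,\dots,\vec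 X^m_{N_C})\in\underline V^h$ is given, with image $\Gamma^m$, and $\nabla\Phi(\vec X^m_i(q^i_j))\ne0$ at all nodes. Inner products: $\langle u,v\rangle_m=\sum_i\int_{I_i}u_i\cdot v_i\,\|(\vec X^m_i)_\rho\|\,d\rho$, and $\nabla_s$ denotes $\partial_\rho/\|(\vec X^m_i)_\rho\|$ (arclength derivative on $\Gamma^m$). With $h^m_{i,j-1/2}=\|\vec X^m_i(q^i_j)-\vec X^m_i(q^i_{j-1})\|$, the mass-lumped product is $\langle u,v\rangle^h_m=\tfrac12\sum_{i=1}^{N_C}\sum_{j=1}^{N_i}h^m_{i,j-1/2}\big[(u_i\cdot v_i)((q^i_j)^-)+(u_i\cdot v_i)((q^i_{j-1})^+)\big]$, one-sided limits. Discrete normals: $\vec\omega^m_{\Phi,i}(q^i_j)=\vec n_\Phi(\vec X^m_i(q^i_j))$; $\vec\omega^m_{d,i}(q^i_j)=\frac{\vec X^m_i(q^i_{j+1})-\vec X^m_i(q^i_{j-1})}{\|\vec X^m_i(q^i_{j+1})-\vec X^m_i(q^i_{j-1})\|}$ for closed curves and for interior nodes of open curves, while for open curves $\vec\omega^m_{d,i}(q^i_0)=\frac{\vec X^m_i(q^i_1)-\vec X^m_i(q^i_0)}{\|\cdot\|}$ and $\vec\omega^m_{d,i}(q^i_{N_i})=\frac{\vec X^m_i(q^i_{N_i})-\vec X^m_i(q^i_{N_i-1})}{\|\cdot\|}$; $\vec\omega^m_{\mathcal M,i}(q^i_j)=\vec\omega^m_{d,i}(q^i_j)\times\vec\omega^m_{\Phi,i}(q^i_j)$;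 these are extended to $I_i$ as piecewise linear interpolants. $\underline V^h_\Phi=\{\vec\eta\in\underline V^h:\vec\eta_i(q^i_j)\cdot\vec\omega^m_{\Phi,i}(q^i_j)=0$ for all $i$ and nodes $j\}$. Assumption $(\mathcal A)$: $h^m_{i,j-1/2}>0$ for all $i$, $j=1,\dots,N_i$, and $\vec X^m_i(q^i_{j+1})\neq\vec X^m_i(q^i_{j-1})$ for $j=1,\dots,N_i$ if $\Gamma_i$ is closed and for $j=1,\dots,N_i-1$ if $\Gamma_i$ is open. Assumption $(\mathcal A_1)$: for every closed curve $\Gamma_i$, $\dim\operatorname{span}\{\vec\omega^m_{\mathcal M,i}(q^i_j),\vec\omega^m_{\Phi,i}(q^i_j)\}_{j=1}^{N_i}=3$. Assumption $(\mathcal A_2)$: for every triple junction $k$, $\dim\operatorname{span}\bigcup_{l=1}^3\{\vec\omega^m_{\mathcal M,i_{k,l}}(q^{i_{k,l}}_j),\vec\omega^m_{\Phi,i_{k,l}}(q^{i_{k,l}}_j)\}_{j=1}^{N_{i_{k,l}}-1}=3$. *)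

(* Defs.v *)
From HB Require Import structures.
From mathcomp Require Import all_boot all_order all_algebra.
Unset Printing Implicit Defensive.
Import Order.TTheory GRing.Theory Num.Theory.
Local Open Scope ring_scope.

Section Network.
Context {R : rcfType}.

Definition dot (u v : 'rV[R]_3) : R := (u *m v^T) 0 0.
Definition vnorm (u : 'rV[R]_3) : R := Num.sqrt (dot u u).
Definition normalize (u : 'rV[R]_3) : 'rV[R]_3 := (vnorm u)^-1 *: u.
Definition comp (u : 'rV[R]_3) (k : nat) : R := u 0 (inord k).
Definition cross (u v : 'rV[R]_3) : 'rV[R]_3 :=
  \row_(k < 3)
    (if (k : nat) == 0%N then comp u 1 * comp v 2 - comp u 2 * comp v 1
     else if (k : nat) == 1%N then comp u 2 * comp v 0 - comp u 0 * comp v 2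
     else comp u 0 * comp v 1 - comp u 1 * comp v 0).

(* dimension of the span of a finite family of vectors = rank of the matrix
   having them as rows *)
Definition rowsmx (s : seq 'rV[R]_3) : 'M[R]_(size s, 3) :=
  \matrix_(k < size s) nth 0 s k.

Context {NC : nat}.
(* N i = number of intervals of the partition of I_i; nodes are 0..N i *)
Variable N : 'I_NC -> nat.
Variable closed : 'I_NC -> bool.

(* nodal values of piecewise linear functions on the curves *)
Definition scalfun := forall i : 'I_NC, 'I_(N i).+1 -> R.
Definition vecfun := forall i : 'I_NC, 'I_(N i).+1 -> 'rV[R]_3.

Definition at_ {T : Type} {n : nat} (f : 'I_n.+1 -> T) (j : nat) : T := f (inord j).

(* neighbouring node indices (periodic for closed curves; for open curves the
   one-sided convention at the endpoints used in the definition of omega_d) *)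
Definition nxt (i : 'I_NC) (j : nat) : nat :=
  if j == N i then (if closed i then 1%N else N i) else j.+1.
Definition prv (i : 'I_NC) (j : nat) : nat :=
  if j == 0%N then (if closed i then (N i).-1 else 0%N) else j.-1.

(* continuity on the periodic interval for closed curves: node 0 = node N_i *)
Definition periodic {T : Type} (f : forall i : 'I_NC, 'I_(N i).+1 -> T) :=
  forall i : 'I_NC, closed i -> f i ord0 = f i ord_max.

Definition inW (u : scalfun) : Prop := periodic u.

Definition endnode (i : 'I_NC) (r : bool) : nat := if r then N i else 0%N.

Context {NT : nat}.
Variable ic : 'I_NT -> 'I_3 -> 'I_NC.
Variable rho : 'I_NT -> 'I_3 -> bool.

Definition inV (X : vecfun) : Prop :=
  periodic X /\
  forall (k : 'I_NT) (l l' : 'I_3),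
    at_ (X (ic k l)) (endnode (ic k l) (rho k l)) =
    at_ (X (ic k l')) (endnode (ic k l') (rho k l')).

Variable gradPhi : 'rV[R]_3 -> 'rV[R]_3.
Variable X : vecfun.

Definition hseg (i : 'I_NC) (j : nat) : R :=
  vnorm (at_ (X i) j - at_ (X i) j.-1).

Definition omega_d (i : 'I_NC) (j : nat) : 'rV[R]_3 :=
  normalize (at_ (X i) (nxt i j) - at_ (X i) (prv i j)).
Definition omega_Phi (i : 'I_NC) (j : nat) : 'rV[R]_3 :=
  normalize (gradPhi (at_ (X i) j)).
Definition omega_M (i : 'I_NC) (j : nat) : 'rV[R]_3 :=
  cross (omega_d i j) (omega_Phi i j).

Definition omegaM_fun : vecfun := fun i j => omega_M i j.

Definition inVPhi (eta : vecfun) : Prop :=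
  inV eta /\ forall (i : 'I_NC) (j : 'I_(N i).+1), dot (eta i j) (omega_Phi i j) = 0.

Definition mlump_s (u v : scalfun) : R :=
  2^-1 * \sum_(i < NC) \sum_(1 <= j < (N i).+1)
     hseg i j * (at_ (u i) j * at_ (v i) j + at_ (u i) j.-1 * at_ (v i) j.-1).
Definition mlump_v (U V : vecfun) : R :=
  2^-1 * \sum_(i < NC) \sum_(1 <= j < (N i).+1)
     hseg i j * (dot (at_ (U i) j) (at_ (V i) j) + dot (at_ (U i) j.-1) (at_ (V i) j.-1)).

(* < nabla_s U, nabla_s V >_m, computed exactly for piecewise linear U, V:
   on [q_{j-1},q_j], nabla_s U = (U_j - U_{j-1}) / h_{j-1/2} and the arclength
   element integrates to h_{j-1/2} *)
Definition stiff (U V : vecfun) : R :=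
  \sum_(i < NC) \sum_(1 <= j < (N i).+1)
     dot (at_ (U i) j - at_ (U i) j.-1) (at_ (V i) j - at_ (V i) j.-1) / hseg i j.

Definition svmul (chi : scalfun) (U : vecfun) : vecfun := fun i j => chi i j *: U i j.
Definition cvmul (c : R) (U : vecfun) : vecfun := fun i j => c *: U i j.

Definition assumption_A : Prop :=
  (forall (i : 'I_NC) (j : nat), (1 <= j <= N i)%N -> 0 < hseg i j) /\
  (forall (i : 'I_NC) (j : nat), (1 <= j)%N ->
     (if closed i then (j <= N i)%N else (j < N i)%N) ->
     at_ (X i) (nxt i j) != at_ (X i) (prv i j)).

Definition assumption_A1 : Prop :=
  forall i : 'I_NC, closed i ->
    \rank (rowsmx ([seq omega_M i j | j <- iota 1 (N i)] ++
                   [seq omega_Phi i j | j <- iota 1 (N i)])) = 3%N.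

Definition assumption_A2 : Prop :=
  forall k : 'I_NT,
    \rank (rowsmx (flatten
      [seq [seq omega_M (ic k l) j | j <- iota 1 (N (ic k l)).-1] ++
           [seq omega_Phi (ic k l) j | j <- iota 1 (N (ic k l)).-1]
      | l <- enum 'I_3])) = 3%N.

End Network.

(* Main.v *)
Require Import Defs.
From HB Require Import structures.
From mathcomp Require Import all_boot all_order all_algebra.
From mathcomp Require Import ring lra.
From Stdlib Require Import FunctionalExtensionality.
Import Order.TTheory GRing.Theory Num.Theory.
Local Open Scope ring_scope.

Section DotL.
Variable R : rcfType.
Implicit Types u v w : 'rV[R]_3.
Lemma msq_ge0 (x : R) : 0 <= x * x. Proof. by rewrite -expr2 sqr_ge0. Qed.
Lemma dotE u v : dot u v = \sum_(k < 3) u 0 k * v 0 k.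
Proof. by rewrite /dot mxE; apply: eq_bigr => k _; rewrite mxE. Qed.
Lemma dotC u v : dot u v = dot v u.
Proof. by rewrite !dotE; apply: eq_bigr => k _; rewrite mulrC. Qed.
Lemma dotDl u v w : dot (u + v) w = dot u w + dot v w.
Proof. by rewrite !dotE -big_split; apply: eq_bigr => k _; rewrite mxE mulrDl. Qed.
Lemma dotZl a u w : dot (a *: u) w = a * dot u w.
Proof. by rewrite !dotE mulr_sumr; apply: eq_bigr => k _; rewrite mxE mulrA. Qed.
Lemma dotNl u w : dot (- u) w = - dot u w.
Proof. by rewrite -scaleN1r dotZl mulN1r. Qed.
Lemma dotBl u v w : dot (u - v) w = dot u w - dot v w.
Proof. by rewrite dotDl dotNl. Qed.
Lemma dotDr u v w : dot w (u + v) = dot w u + dot w v.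
Proof. by rewrite dotC dotDl !(dotC w). Qed.
Lemma dotZr a u w : dot w (a *: u) = a * dot w u.
Proof. by rewrite dotC dotZl dotC. Qed.
Lemma dotBr u v w : dot w (u - v) = dot w u - dot w v.
Proof. by rewrite dotC dotBl !(dotC w). Qed.
Lemma dot0l u : dot 0 u = 0.
Proof. by rewrite dotE big1 // => k _; rewrite mxE mul0r. Qed.
Lemma dot0r u : dot u 0 = 0.
Proof. by rewrite dotC dot0l. Qed.
Lemma dot_ge0 u : 0 <= dot u u.
Proof. by rewrite dotE; apply: sumr_ge0 => k _; apply: msq_ge0. Qed.
Lemma dot_eq0 u : dot u u = 0 -> u = 0.
Proof.
rewrite dotE => /psumr_eq0P H; apply/rowP => k.
rewrite mxE.
have /eqP := H (fun l _ => msq_ge0 _) k isT; rewrite mulf_eq0 orbb => /eqP.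
by [].
Qed.

End DotL.
Arguments dotC {R}.
Section Abs.
Variables (K : fieldType) (V W : vectType K).
Definition mkLin (g : V -> W) (Hg : linear g) : {linear V -> W} :=
  HB.pack g (GRing.isLinear.Build K V W *:%R g Hg).

Lemma sum_lin (f : V -> K) (Hf : forall a x y, f (a *: x + y) = a * f x + f y)
  (I : Type) (r : seq I) (c : I -> K) (x : I -> V) :
  f (\sum_(i <- r) c i *: x i) = \sum_(i <- r) c i * f (x i).
Proof.
have f0 : f 0 = 0.
  have := Hf 1 0 0; rewrite scaler0 addr0 mul1r => H.
  by apply: (@addrI _ (f 0)); rewrite addr0 -H.
elim: r => [|y r IH]; first by rewrite !big_nil.
by rewrite !big_cons Hf IH.
Qed.

Lemma abs_lax (g : V -> W) (Hg : linear g) (b : V -> V -> K) (l : V -> K)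
 (Hb1 : forall q a x y, b (a *: x + y) q = a * b x q + b y q)
 (Hb2 : forall p a x y, b p (a *: x + y) = a * b p x + b p y)
 (Hl : forall a x y, l (a *: x + y) = a * l x + l y)
 (Hinj : forall p, g p = 0 -> (forall q, g q = 0 -> b p q = 0) -> p = 0) :
 exists p, g p = 0 /\ forall q, g q = 0 -> b p q = l q.
Proof.
pose S := lker (linfun (@mkLin g Hg)).
have memS v : (v \in S) = (g v == 0) by rewrite memv_ker lfunE.
pose d := \dim S; pose e := vbasis S.
have eS k : e`_k \in S.
  case: (ltnP k (size e)) => hk; first by apply: vbasis_mem; exact: mem_nth.
  by rewrite nth_default // mem0v.
pose M : 'M[K]_d := \matrix_(k, j) b e`_k e`_j.
have key (a : 'rV[K]_d) q : q \in S ->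
    b (\sum_k a 0 k *: e`_k) q = \sum_j coord e j q * (a *m M) 0 j.
  move=> Hq; rewrite {1}(coord_vbasis Hq).
  rewrite (@sum_lin _ (Hb2 _)); apply: eq_bigr => j _; congr (_ * _).
  rewrite (@sum_lin _ (fun a x y => Hb1 _ a x y)) !mxE; apply: eq_bigr => k _.
  by rewrite !mxE.
have pS (a : 'rV[K]_d) : \sum_k a 0 k *: e`_k \in S.
  by apply: memv_suml => k _; apply: memvZ.
have Mu : M \in unitmx.
  rewrite unitmxE unitfE; apply/negP => /det0P [v nv0 vM].
  have p0 : \sum_k v 0 k *: e`_k = 0.
    apply: Hinj; first by apply/eqP; rewrite -memS.
    move=> q /eqP; rewrite -memS => Hq; rewrite key // vM.
    by apply: big1 => j _; rewrite mxE mulr0.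
  move/freeP: (basis_free (vbasisP S)) => /(_ (fun k => v 0 k) p0) H. move/negP: nv0; apply; apply/eqP/rowP => k.
  by rewrite H mxE.
pose rl := \row_(j < d) l e`_j.
exists (\sum_k (rl *m invmx M) 0 k *: e`_k); split.
  by apply/eqP; rewrite -memS.
move=> q /eqP; rewrite -memS => Hq; rewrite key // mulmxKV //.
rewrite {2}(coord_vbasis Hq) (@sum_lin _ Hl); apply: eq_bigr => j _.
by rewrite mxE.
Qed.
End Abs.
Section Lin.
Variables (R : rcfType) (NC : nat) (N : 'I_NC -> nat) (X : @vecfun R NC N).
Definition vlin (a:R) (U U' : vecfun N) : vecfun N := fun i j => a *: U i j + U' i j.
Definition slin (a:R) (u u' : scalfun N) : scalfun N := fun i j => a * u i j + u' i j.

Lemma dsum_lin (F G H : 'I_NC -> nat -> R) a :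
 (forall i j, F i j = a * G i j + H i j) ->
 \sum_(i < NC) \sum_(1 <= j < (N i).+1) F i j =
 a * (\sum_(i < NC) \sum_(1 <= j < (N i).+1) G i j) +
 \sum_(i < NC) \sum_(1 <= j < (N i).+1) H i j.
Proof.
move=> E; rewrite mulr_sumr -big_split; apply: eq_bigr => i _.
rewrite mulr_sumr -big_split; apply: eq_bigr => j _; exact: E.
Qed.

Lemma mlump_v_linl a U U' W :
  mlump_v N X (vlin a U U') W = a * mlump_v N X U W + mlump_v N X U' W.
Proof.
rewrite /mlump_v mulrCA -mulrDr; congr (_ * _); apply: dsum_lin => i j.
rewrite /at_ /vlin !dotDl !dotZl; ring.
Qed.

Lemma mlump_v_sym U W : mlump_v N X U W = mlump_v N X W U.
Proof.
rewrite /mlump_v; congr (_ * _); apply: eq_bigr => i _; apply: eq_bigr => j _.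
by rewrite !(dotC (at_ (U i) _)).
Qed.

Lemma mlump_v_linr a U U' W :
  mlump_v N X W (vlin a U U') = a * mlump_v N X W U + mlump_v N X W U'.
Proof. by rewrite !(mlump_v_sym W) mlump_v_linl. Qed.

Lemma mlump_s_linl a u u' w :
  mlump_s N X (slin a u u') w = a * mlump_s N X u w + mlump_s N X u' w.
Proof.
rewrite /mlump_s mulrCA -mulrDr; congr (_ * _); apply: dsum_lin => i j.
rewrite /at_ /slin; ring.
Qed.

Lemma mlump_s_sym u w : mlump_s N X u w = mlump_s N X w u.
Proof.
rewrite /mlump_s; congr (_ * _); apply: eq_bigr => i _; apply: eq_bigr => j _.
by rewrite !(mulrC (at_ (u i) _)).
Qed.

Lemma mlump_s_linr a u u' w :
  mlump_s N X w (slin a u u') = a * mlump_s N X w u + mlump_s N X w u'.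
Proof. by rewrite !(mlump_s_sym w) mlump_s_linl. Qed.

Lemma stiff_linl a U U' W :
  stiff N X (vlin a U U') W = a * stiff N X U W + stiff N X U' W.
Proof.
rewrite /stiff; apply: dsum_lin => i j.
rewrite /at_ /vlin !dotBl !dotDl !dotZl; ring.
Qed.

Lemma stiff_sym U W : stiff N X U W = stiff N X W U.
Proof.
rewrite /stiff; apply: eq_bigr => i _; apply: eq_bigr => j _.
by rewrite dotC.
Qed.

Lemma stiff_linr a U U' W :
  stiff N X W (vlin a U U') = a * stiff N X W U + stiff N X W U'.
Proof. by rewrite !(stiff_sym W) stiff_linl. Qed.

Lemma cvmul_vlin c a U U' :
  cvmul N c (vlin a U U') = vlin a (cvmul N c U) (cvmul N c U').
Proof.
apply: functional_extensionality_dep => i; apply: functional_extensionality => j.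
by rewrite /cvmul /vlin scalerDr !scalerA mulrC.
Qed.

Lemma svmul_slin a u u' W :
  svmul N (slin a u u') W = vlin a (svmul N u W) (svmul N u' W).
Proof.
apply: functional_extensionality_dep => i; apply: functional_extensionality => j.
by rewrite /svmul /vlin /slin scalerDl scalerA.
Qed.

Lemma mlump_v0r U Z : (forall i j, Z i j = 0) -> mlump_v N X U Z = 0.
Proof.
move=> HZ; rewrite /mlump_v big1 ?mulr0 // => i _; rewrite big1 // => j _.
by rewrite /at_ !HZ !dot0r addr0 mulr0.
Qed.

Lemma mlump_s0r u z : (forall i j, z i j = 0) -> mlump_s N X u z = 0.
Proof.
move=> HZ; rewrite /mlump_s big1 ?mulr0 // => i _; rewrite big1 // => j _.
by rewrite /at_ !HZ !mulr0 addr0 mulr0.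
Qed.

Lemma stiff0r U Z : (forall i j, Z i j = 0) -> stiff N X U Z = 0.
Proof.
move=> HZ; rewrite /stiff big1 // => i _; rewrite big1 // => j _.
by rewrite /at_ !HZ subrr dot0r mul0r.
Qed.
End Lin.
Arguments mlump_v0r {R NC N X}.
Arguments mlump_s0r {R NC N X}.
Arguments stiff0r {R NC N X}.
Arguments vlin {R NC N}.
Arguments slin {R NC N}.
Lemma rank3_orth (R : rcfType) (s : seq 'rV[R]_3) c :
  \rank (rowsmx s) = 3%N -> (forall v, v \in s -> dot c v = 0) -> c = 0.
Proof.
move=> Hr Hs.
have /row_fullP [B HB] : row_full (rowsmx s) by rewrite /row_full Hr.
have A0 : rowsmx s *m c^T = 0.
  apply/matrixP => k z; rewrite !mxE (ord1 z).
  rewrite -[RHS](Hs (nth 0 s k)); last by apply: mem_nth.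
  rewrite dotC dotE; apply: eq_bigr => m _; rewrite !mxE mulrC.
  by [].
have : c^T = 0 by rewrite -[c^T]mul1mx -HB -mulmxA A0 mulmx0.
by move/(congr1 trmx); rewrite trmxK trmx0.
Qed.

Section Pos.
Variables (R : rcfType) (NC : nat) (N : 'I_NC -> nat) (X : @vecfun R NC N).
Hypothesis HN : forall i, (0 < N i)%N.
Hypothesis Hh : forall i j, (1 <= j <= N i)%N -> 0 < hseg N X i j.

Lemma hseg_ge0 i j : 0 <= hseg N X i j.
Proof. exact: sqrtr_ge0. Qed.

Lemma ms_ge0 u : 0 <= mlump_s N X u u.
Proof.
apply: mulr_ge0; first by rewrite invr_ge0 ler0n.
apply: sumr_ge0 => i _; apply: sumr_ge0 => j _.
by apply: mulr_ge0; [apply: hseg_ge0 | apply: addr_ge0; apply: msq_ge0].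
Qed.

Lemma st_ge0 U : 0 <= stiff N X U U.
Proof.
apply: sumr_ge0 => i _; apply: sumr_ge0 => j _.
by apply: divr_ge0; [apply: dot_ge0 | apply: hseg_ge0].
Qed.

Lemma sum2_eq0 (F : 'I_NC -> nat -> R) :
  (forall i j, 0 <= F i j) ->
  \sum_(i < NC) \sum_(1 <= j < (N i).+1) F i j = 0 ->
  forall i j, (1 <= j <= N i)%N -> F i j = 0.
Proof.
move=> F0 /psumr_eq0P H i j Hj.
have /eqP := H (fun i _ => sumr_ge0 _ (fun j _ => F0 i j)) i isT.
rewrite psumr_eq0; last by move=> k _; apply: F0.
move/allP => /(_ j); rewrite mem_index_iota ltnS => /(_ Hj) /eqP.
by [].
Qed.

Lemma ms_eq0 u : mlump_s N X u u = 0 -> forall i (j : 'I_(N i).+1), u i j = 0.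
Proof.
move=> /eqP; rewrite mulf_eq0 invr_eq0 pnatr_eq0 /= => /eqP H0.
have F0 : forall i j, 0 <= hseg N X i j *
   (at_ (u i) j * at_ (u i) j + at_ (u i) j.-1 * at_ (u i) j.-1).
  move=> i k; apply: mulr_ge0; [apply: hseg_ge0 | apply: addr_ge0; apply: msq_ge0].
have T := sum2_eq0 _ F0 H0.
have T' : forall i k, (1 <= k <= N i)%N -> at_ (u i) k = 0 /\ at_ (u i) k.-1 = 0.
  move=> i k Hk; have := T i k Hk.
  move=> /eqP; rewrite mulf_eq0 (gt_eqF (Hh _ _ Hk)) /= paddr_eq0; try exact: msq_ge0.
  by rewrite !mulf_eq0 !orbb => /andP [/eqP -> /eqP ->].
move=> i j; rewrite -[j]inord_val.
case: (posnP j) => [j0 | jp].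
  have := T' i 1%N; rewrite /= HN => /(_ isT) [_]; rewrite /at_ j0 //.
by have := T' i j; rewrite jp -ltnS ltn_ord => /(_ isT) [].
Qed.

Lemma st_eq0 U : stiff N X U U = 0 ->
  forall i k, (k <= N i)%N -> at_ (U i) k = at_ (U i) 0.
Proof.
move=> H0.
have T := sum2_eq0 _ (fun i j => divr_ge0 (dot_ge0 _ _) (hseg_ge0 i j)) H0.
move=> i; elim => [//|k IH] Hk.
rewrite -IH; last by apply: ltnW.
have Hk' : (0 < k.+1 <= N i)%N := Hk.
have /eqP := T i k.+1 Hk'.
rewrite mulf_eq0 invr_eq0 (gt_eqF (Hh _ _ Hk')) orbF => /eqP /dot_eq0 /eqP.
by rewrite subr_eq0 => /eqP.
Qed.
End Pos.
Arguments ms_eq0 {R NC N X}.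
Arguments st_eq0 {R NC N X}.
Arguments ms_ge0 {R NC N}.
Arguments st_ge0 {R NC N}.
Arguments rank3_orth {R s c}.
Section Core.
Variables (R : rcfType) (NC : nat) (N : 'I_NC -> nat) (closed : 'I_NC -> bool)
  (NT : nat) (ic : 'I_NT -> 'I_3 -> 'I_NC) (rho : 'I_NT -> 'I_3 -> bool).
Hypothesis HN : forall i : 'I_NC, (0 < N i)%N.
Hypothesis Hends : forall (i : 'I_NC) (r : bool), ~~ closed i ->
             exists (k : 'I_NT) (l : 'I_3), ic k l = i /\ rho k l = r.
Variables (gradPhi : 'rV[R]_3 -> 'rV[R]_3) (X : @vecfun R NC N).
Hypothesis HX : @inV R NC N closed NT ic rho X.
Hypothesis HA : assumption_A N closed X.
Hypothesis HA1 : assumption_A1 N closed gradPhi X.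
Hypothesis HA2 : assumption_A2 N closed ic gradPhi X.

Local Notation omM := (omegaM_fun N closed gradPhi X).

Lemma inord0' i : (@inord (N i) 0) = ord0.
Proof. by apply: val_inj; rewrite /= inordK. Qed.
Lemma inordN i : (@inord (N i) (N i)) = ord_max.
Proof. by apply: val_inj; rewrite /= inordK. Qed.

Lemma omega_M_per i : closed i -> omega_M N closed gradPhi X i 0 = omega_M N closed gradPhi X i (N i).
Proof.
move=> ci; rewrite /omega_M /omega_Phi /omega_d /nxt /prv.
have -> : (0 == N i) = false by apply/negbTE; rewrite eq_sym -lt0n HN.
have -> : (N i == 0%N) = false by apply/negbTE; rewrite -lt0n HN.
rewrite eqxx ci /at_ inord0' inordN; congr (cross _ (normalize (gradPhi _))).
  by rewrite eqxx.
exact: (HX.1 i ci).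
Qed.

Lemma core (sigma tau : R) (Hs : 0 < sigma) (Ht : 0 < tau) D K :
 inVPhi N closed ic rho gradPhi X D -> inW N closed K ->
 (forall chi, inW N closed chi ->
    mlump_v N X (cvmul N tau^-1 D) (svmul N chi omM) - sigma * mlump_s N X K chi = 0) ->
 (forall eta, inVPhi N closed ic rho gradPhi X eta ->
    mlump_v N X (svmul N K omM) eta + stiff N X D eta = 0) ->
 (forall i j, D i j = 0) /\ (forall i j, K i j = 0).
Proof.
move=> [[HDper HDjun] HDphi] HK E1 E2.
have sym1 chi : mlump_v N X (cvmul N tau^-1 D) (svmul N chi omM) =
    tau^-1 * mlump_v N X (svmul N chi omM) D.
  rewrite /mlump_v mulrCA; congr (_ * _); rewrite mulr_sumr; apply: eq_bigr => i _.
  rewrite mulr_sumr; apply: eq_bigr => j _.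
  rewrite /at_ /cvmul /svmul !dotZl !dotZr !(dotC (omM _ _)); ring.
have Hh := HA.1.
have e1 := E1 K HK; rewrite sym1 in e1.
have e2 := E2 D (conj (conj HDper HDjun) HDphi).
have ms := ms_ge0 X K; have st := st_ge0 X D.
have Hsum : sigma * mlump_s N X K K + tau^-1 * stiff N X D D = 0.
  have -> : stiff N X D D = - mlump_v N X (svmul N K omM) D.
    by apply/eqP; rewrite -addr_eq0 addrC e2.
  transitivity (-(tau^-1 * mlump_v N X (svmul N K omM) D - sigma * mlump_s N X K K)).
    by ring.
  by rewrite e1 oppr0.
have p1 : 0 <= sigma * mlump_s N X K K by apply: mulr_ge0 => //; apply: ltW.
have p2 : 0 <= tau^-1 * stiff N X D D by apply: mulr_ge0 => //; rewrite invr_ge0 ltW.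
move/eqP: Hsum; rewrite paddr_eq0 // => /andP [].
rewrite [sigma * _ == 0]mulf_eq0 [tau^-1 * _ == 0]mulf_eq0 (gt_eqF Hs) invr_eq0 (gt_eqF Ht) /= => /eqP s0 /eqP st0.
have K0 := ms_eq0 HN Hh _ s0.
have Dc := st_eq0 Hh _ st0.
pose chi : scalfun N := fun i j => dot (D i j) (omM i j).
have Hchi : inW N closed chi.
  move=> i ci; rewrite /chi /omegaM_fun (HDper i ci) /=.
  by rewrite (omega_M_per i ci).
have e1' := E1 chi Hchi; rewrite sym1 in e1'.
have Ech : mlump_v N X (svmul N chi omM) D = mlump_s N X chi chi.
  rewrite /mlump_v /mlump_s; congr (_ * _); apply: eq_bigr => i _.
  apply: eq_bigr => j _; rewrite /at_ /svmul /chi !dotZl !(dotC (omM _ _)).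
  by [].
rewrite Ech mlump_s_sym (mlump_s0r _ _ K0) mulr0 subr0 in e1'.
move/eqP: e1'; rewrite mulf_eq0 invr_eq0 (gt_eqF Ht) /= => /eqP c0.
have chi0 := ms_eq0 HN Hh _ c0.
have Dconst i (j : 'I_(N i).+1) : D i j = D i ord0.
  by rewrite -[j]inord_val -(inord0' i); apply: (Dc i j); rewrite -ltnS.
have orthM i j : (j <= N i)%N -> dot (D i ord0) (omega_M N closed gradPhi X i j) = 0.
  move=> Hj; have := chi0 i (inord j); rewrite /chi /omegaM_fun inordK ?ltnS //.
  by rewrite Dconst.
have orthP i j : (j <= N i)%N -> dot (D i ord0) (omega_Phi N gradPhi X i j) = 0.
  move=> Hj; have := HDphi i (inord j); rewrite inordK ?ltnS //.
  by rewrite Dconst.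
have c0i i : D i ord0 = 0.
  case ci: (closed i).
    apply: (rank3_orth (HA1 i ci)) => v; rewrite mem_cat => /orP [] /mapP [j].
      by rewrite mem_iota => /andP [_ Hj] ->; apply: orthM; rewrite -ltnS -(add1n (N i)).
    by rewrite mem_iota => /andP [_ Hj] ->; apply: orthP; rewrite -ltnS -(add1n (N i)).
  have [k [l [ikl _]]] := Hends i false (negbT ci).
  have cj l' : D (ic k l') ord0 = D i ord0.
    have := HDjun k l l'; rewrite /at_ !Dconst ikl.
    by move=> ->.
  apply: (rank3_orth (HA2 k)) => v /flatten_mapP [l' _].
  rewrite -(cj l') mem_cat => /orP [] /mapP [j].
    rewrite mem_iota => /andP [_ Hj] ->; apply: orthM.
    by apply: leq_trans (leq_pred _); rewrite -ltnS -(add1n (N _).-1).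
  rewrite mem_iota => /andP [_ Hj] ->; apply: orthP.
  by apply: leq_trans (leq_pred _); rewrite -ltnS -(add1n (N _).-1).
split=> i j; first by rewrite Dconst c0i.
exact: K0.
Qed.
End Core.
Lemma ffunDx (R : rcfType) (I : finType) (M : lmodType R) (f g : {ffun I -> M}) x :
  (f + g) x = f x + g x.
Proof. by rewrite ffunE. Qed.
Lemma ffunZx (R : rcfType) (I : finType) (M : lmodType R) a (f : {ffun I -> M}) x :
  (a *: f) x = a *: f x.
Proof. by rewrite ffunE. Qed.
Lemma ffun0x (R : rcfType) (I : finType) (M : lmodType R) x :
  (0 : {ffun I -> M}) x = 0.
Proof. by rewrite ffunE. Qed.
Lemma pairD (R : rcfType) (A B : lmodType R) a (v w : A * B) :
  (a *: v + w) = (a *: v.1 + w.1, a *: v.2 + w.2).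
Proof. by []. Qed.
Lemma lin_sub (R : rcfType) (M : lmodType R) a (x y x' y' : M) :
  (a *: x + y) - (a *: x' + y') = a *: (x - x') + (y - y').
Proof. by rewrite scalerBr opprD addrACA. Qed.

Section Final.
Variables (R : rcfType) (NC : nat) (N : 'I_NC -> nat) (closed : 'I_NC -> bool)
  (NT : nat) (ic : 'I_NT -> 'I_3 -> 'I_NC) (rho : 'I_NT -> 'I_3 -> bool).
Variables (gradPhi : 'rV[R]_3 -> 'rV[R]_3) (X : @vecfun R NC N).
Variables (sigma tau : R) (F : @scalfun R NC N).

Local Notation omM := (omegaM_fun N closed gradPhi X).
Local Notation Idx := {i : 'I_NC & 'I_(N i).+1}.
Local Notation Vt := ({ffun Idx -> 'rV[R]_3} * {ffun Idx -> R^o})%type.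
Local Notation Wt := (({ffun 'I_NC -> 'rV[R]_3} * {ffun 'I_NC -> R^o}) *
   ({ffun ('I_NT * 'I_3 * 'I_3)%type -> 'rV[R]_3} * {ffun Idx -> R^o}))%type.

Definition tg {i} (j : 'I_(N i).+1) : Idx := Tagged (fun i => 'I_(N i).+1) j.
Definition ofV1 (v : Vt) : vecfun N := fun i j => v.1 (tg j).
Definition ofV2 (v : Vt) : scalfun N := fun i j => v.2 (tg j).
Definition toV (U : vecfun N) (u : scalfun N) : Vt :=
  ([ffun x => U (tag x) (tagged x)], [ffun x => u (tag x) (tagged x)]).

Lemma ofV1_toV U u : ofV1 (toV U u) = U.
Proof.
apply: functional_extensionality_dep => i; apply: functional_extensionality => j.
by rewrite /ofV1 /toV /= ffunE.
Qed.
Lemma ofV2_toV U u : ofV2 (toV U u) = u.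
Proof.
apply: functional_extensionality_dep => i; apply: functional_extensionality => j.
by rewrite /ofV2 /toV /= ffunE.
Qed.
Lemma ofV1_lin a v w : ofV1 (a *: v + w) = vlin a (ofV1 v) (ofV1 w).
Proof.
apply: functional_extensionality_dep => i; apply: functional_extensionality => j.
by rewrite /ofV1 /vlin pairD /= ffunDx ffunZx.
Qed.
Lemma ofV2_lin a v w : ofV2 (a *: v + w) = slin a (ofV2 v) (ofV2 w).
Proof.
apply: functional_extensionality_dep => i; apply: functional_extensionality => j.
by rewrite /ofV2 /slin pairD /= ffunDx ffunZx.
Qed.

Definition gC (v : Vt) : Wt :=
  (([ffun i => if closed i then ofV1 v i ord0 - ofV1 v i ord_max else 0],
    [ffun i => (if closed i then ofV2 v i ord0 - ofV2 v i ord_max else 0 : R^o)]),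
   ([ffun t : ('I_NT * 'I_3 * 'I_3)%type =>
       at_ (ofV1 v (ic t.1.1 t.1.2)) (endnode N (ic t.1.1 t.1.2) (rho t.1.1 t.1.2))
     - at_ (ofV1 v (ic t.1.1 t.2)) (endnode N (ic t.1.1 t.2) (rho t.1.1 t.2))],
    [ffun x : Idx => (dot (v.1 x) (omega_Phi N gradPhi X (tag x) (tagged x)) : R^o)])).

Lemma gC_lin : linear gC.
Proof.
move=> a u v; rewrite [RHS]pairD /= [in RHS]pairD [in RHS]pairD /=.
congr ((_, _), (_, _)); apply/ffunP => x; rewrite !ffunE ?ffunDx ?ffunZx.
- rewrite ofV1_lin /vlin; case: (closed x); last by rewrite scaler0 addr0.
  by rewrite lin_sub.
- rewrite ofV2_lin /slin; case: (closed x); last by rewrite scaler0 addr0.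
  by rewrite (lin_sub R R^o).
- by rewrite ofV1_lin /vlin /at_ lin_sub.
- by rewrite ?pairD /= ?ffunDx ?ffunZx dotDl dotZl.
Qed.

Lemma gS_to v : gC v = 0 ->
  inVPhi N closed ic rho gradPhi X (ofV1 v) /\ inW N closed (ofV2 v).
Proof.
move=> H.
have H1 := congr1 (fun z : Wt => z.1.1) H; have H2 := congr1 (fun z : Wt => z.1.2) H.
have H3 := congr1 (fun z : Wt => z.2.1) H; have H4 := congr1 (fun z : Wt => z.2.2) H.
rewrite /= in H1 H2 H3 H4.
split; [split; [split|] |].
- move=> i ci; move/ffunP: (H1) => /(_ i); rewrite /= ffunE ffun0x ci.
  by move/eqP; rewrite subr_eq0 => /eqP.
- move=> k l l'; move/ffunP: (H3) => /(_ (k, l, l')); rewrite /= ffunE ffun0x.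
  by move/eqP; rewrite subr_eq0 => /eqP.
- move=> i j; move/ffunP: (H4) => /(_ (tg j)); rewrite /= ffunE ffun0x.
  by [].
- move=> i ci; move/ffunP: (H2) => /(_ i); rewrite /= ffunE ffun0x ci.
  by move/eqP; rewrite subr_eq0 => /eqP.
Qed.

Lemma gS_of v :
  inVPhi N closed ic rho gradPhi X (ofV1 v) -> inW N closed (ofV2 v) -> gC v = 0.
Proof.
move=> [[Hp Hj] Hd] Hw.
rewrite /gC; congr ((_, _), (_, _)); apply/ffunP => x; rewrite !ffunE.
- by case cx: (closed x); rewrite // (Hp x cx) subrr.
- by case cx: (closed x); rewrite // (Hw x cx) subrr.
- by rewrite (Hj x.1.1 x.1.2 x.2) subrr.
- by case: x => i j; apply: (Hd i j).
Qed.

Definition bC (v w : Vt) : R :=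
  mlump_v N X (cvmul N tau^-1 (ofV1 v)) (svmul N (ofV2 w) omM)
  - sigma * mlump_s N X (ofV2 v) (ofV2 w)
  + (mlump_v N X (svmul N (ofV2 v) omM) (ofV1 w) + stiff N X (ofV1 v) (ofV1 w)).
Definition lC (w : Vt) : R := mlump_s N X F (ofV2 w) + - stiff N X X (ofV1 w).

Lemma bC1 q a x y : bC (a *: x + y) q = a * bC x q + bC y q.
Proof.
rewrite /bC ofV1_lin ofV2_lin cvmul_vlin svmul_slin mlump_v_linl mlump_s_linl.
rewrite mlump_v_linl stiff_linl; ring.
Qed.
Lemma bC2 p a x y : bC p (a *: x + y) = a * bC p x + bC p y.
Proof.
rewrite /bC ofV1_lin ofV2_lin svmul_slin mlump_v_linr mlump_s_linr.
rewrite mlump_v_linr stiff_linr; ring.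
Qed.
Lemma lC_lin a x y : lC (a *: x + y) = a * lC x + lC y.
Proof. rewrite /lC ofV1_lin ofV2_lin mlump_s_linr stiff_linr; ring. Qed.

Definition Z0 : @vecfun R NC N := fun _ _ => 0.
Definition z0 : @scalfun R NC N := fun _ _ => 0.

Lemma Z0_in : inVPhi N closed ic rho gradPhi X Z0.
Proof. by split; [split|] => //= *; rewrite /Z0 ?dot0l. Qed.
Lemma z0_in : inW N closed z0.
Proof. by []. Qed.

Lemma bC_chi p chi : bC p (toV Z0 chi) =
  mlump_v N X (cvmul N tau^-1 (ofV1 p)) (svmul N chi omM) - sigma * mlump_s N X (ofV2 p) chi.
Proof.
rewrite /bC ofV1_toV ofV2_toV (mlump_v0r _ Z0) // (stiff0r _ Z0) //.
by rewrite addr0 addr0.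
Qed.
Lemma bC_eta p eta : bC p (toV eta z0) =
  mlump_v N X (svmul N (ofV2 p) omM) eta + stiff N X (ofV1 p) eta.
Proof.
rewrite /bC ofV1_toV ofV2_toV (mlump_v0r _ (svmul N z0 omM)); last first.
  by move=> i j; rewrite /svmul /z0 scale0r.
by rewrite (mlump_s0r _ z0) // mulr0 subr0 add0r.
Qed.
Lemma lC_chi chi : lC (toV Z0 chi) = mlump_s N X F chi.
Proof. by rewrite /lC ofV1_toV ofV2_toV (stiff0r _ Z0) // oppr0 addr0. Qed.
Lemma lC_eta eta : lC (toV eta z0) = - stiff N X X eta.
Proof. by rewrite /lC ofV1_toV ofV2_toV (mlump_s0r _ z0) // add0r. Qed.

Hypothesis HN : forall i : 'I_NC, (0 < N i)%N.
Hypothesis Hends : forall (i : 'I_NC) (r : bool), ~~ closed i ->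
             exists (k : 'I_NT) (l : 'I_3), ic k l = i /\ rho k l = r.
Hypothesis HX : @inV R NC N closed NT ic rho X.
Hypothesis HA : assumption_A N closed X.
Hypothesis HA1 : assumption_A1 N closed gradPhi X.
Hypothesis HA2 : assumption_A2 N closed ic gradPhi X.
Hypothesis Hs : 0 < sigma.
Hypothesis Ht : 0 < tau.

Lemma bC_inj p : gC p = 0 -> (forall q, gC q = 0 -> bC p q = 0) -> p = 0.
Proof.
move=> gp Hq; have [HD HK] := gS_to _ gp.
have [D0 K0] := core _ _ _ _ _ _ _ HN Hends _ _ HX HA HA1 HA2 _ _ Hs Ht _ _ HD HK
  (fun chi Hchi => etrans (esym (bC_chi p chi))
     (Hq _ (gS_of _ (eq_ind_r _ Z0_in (ofV1_toV _ _)) (eq_ind_r _ Hchi (ofV2_toV _ _)))))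
  (fun eta Heta => etrans (esym (bC_eta p eta))
     (Hq _ (gS_of _ (eq_ind_r _ Heta (ofV1_toV _ _)) (eq_ind_r _ z0_in (ofV2_toV _ _))))).
case: p D0 K0 {gp Hq HD HK} => p1 p2 D0 K0.
congr (_, _); apply/ffunP => -[i j]; rewrite ffun0x.
  exact: (D0 i j).
exact: (K0 i j).
Qed.

Lemma bC_eqs p : gC p = 0 ->
  ((forall q, gC q = 0 -> bC p q = lC q) <->
   ((forall chi, inW N closed chi ->
       mlump_v N X (cvmul N tau^-1 (ofV1 p)) (svmul N chi omM)
       - sigma * mlump_s N X (ofV2 p) chi = mlump_s N X F chi) /\
    (forall eta, inVPhi N closed ic rho gradPhi X eta ->
       mlump_v N X (svmul N (ofV2 p) omM) eta + stiff N X (ofV1 p) eta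
       = - stiff N X X eta))).
Proof.
move=> gp; split.
  move=> H; split.
    move=> chi Hchi; rewrite -bC_chi -lC_chi; apply: H.
    by apply: gS_of; rewrite ?ofV1_toV ?ofV2_toV //; apply: Z0_in.
  move=> eta Heta; rewrite -bC_eta -lC_eta; apply: H.
  by apply: gS_of; rewrite ?ofV1_toV ?ofV2_toV //; apply: z0_in.
move=> [E1 E2] q gq; have [Hv Hw] := gS_to _ gq.
rewrite /bC /lC (E2 _ Hv) -(E1 _ Hw) /=.
by [].
Qed.

Lemma main_sec : exists! p : @vecfun R NC N * @scalfun R NC N,
    inVPhi N closed ic rho gradPhi X p.1 /\ inW N closed p.2 /\
    (forall chi : @scalfun R NC N, inW N closed chi ->
       mlump_v N X (cvmul N tau^-1 p.1) (svmul N chi omM)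
       - sigma * mlump_s N X p.2 chi = mlump_s N X F chi) /\
    (forall eta : @vecfun R NC N, inVPhi N closed ic rho gradPhi X eta ->
       mlump_v N X (svmul N p.2 omM) eta + stiff N X p.1 eta
       = - stiff N X X eta).
Proof.
have [p [gp Hp]] := abs_lax _ _ _ _ gC_lin _ _ bC1 bC2 lC_lin bC_inj.
have [HD HK] := gS_to _ gp.
have [E1 E2] := (bC_eqs _ gp).1 Hp.
exists (ofV1 p, ofV2 p); split; first by [].
move=> [p1 p2] /= [Hv [Hw [E1' E2']]].
pose q' := toV p1 p2.
have gq' : gC q' = 0 by apply: gS_of; rewrite ?ofV1_toV ?ofV2_toV.
have Hq' : forall q, gC q = 0 -> bC q' q = lC q.
  apply/(bC_eqs _ gq'); rewrite /q' ofV1_toV ofV2_toV; split; [exact: E1' | exact: E2'].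
pose d := (-1) *: p + q'.
have gd : gC d = 0 by rewrite /d gC_lin gp gq' scaler0 add0r.
have d0 : d = 0.
  apply: bC_inj gd _ => q gq; rewrite /d bC1 (Hp _ gq) (Hq' _ gq); ring.
have E : q' = p by move: d0 => /eqP; rewrite /d scaleN1r addrC subr_eq0 => /eqP.
by rewrite -E /q' ofV1_toV ofV2_toV.
Qed.
End Final.
Theorem mainTheorem1
  (R : rcfType) (NC : nat) (N : 'I_NC -> nat) (closed : 'I_NC -> bool)
  (NT : nat) (ic : 'I_NT -> 'I_3 -> 'I_NC) (rho : 'I_NT -> 'I_3 -> bool)
  (* network topology *)
  (HN : forall i : 'I_NC, (0 < N i)%N)
  (Hdistinct : forall (k : 'I_NT) (l l' : 'I_3), ic k l = ic k l' -> l = l')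
  (Hopen : forall (k : 'I_NT) (l : 'I_3), ~~ closed (ic k l))
  (Hends : forall (i : 'I_NC) (r : bool), ~~ closed i ->
             exists (k : 'I_NT) (l : 'I_3), ic k l = i /\ rho k l = r)
  (* gradient of Phi *)
  (gradPhi : 'rV[R]_3 -> 'rV[R]_3)
  (* the current parameterization X^m *)
  (X : @vecfun R NC N)
  (HX : @inV R NC N closed NT ic rho X)
  (HgradX : forall (i : 'I_NC) (j : 'I_(N i).+1), gradPhi (X i j) != 0)
  (HA : assumption_A N closed X)
  (HA1 : assumption_A1 N closed gradPhi X)
  (HA2 : assumption_A2 N closed ic gradPhi X)
  (sigma tau : R) (Hsigma : 0 < sigma) (Htau : 0 < tau)
  (F : @scalfun R NC N) (HF : inW N closed F) :
  exists! p : @vecfun R NC N * @scalfun R NC N,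
    inVPhi N closed ic rho gradPhi X p.1 /\ inW N closed p.2 /\
    (forall chi : @scalfun R NC N, inW N closed chi ->
       mlump_v N X (cvmul N tau^-1 p.1) (svmul N chi (omegaM_fun N closed gradPhi X))
       - sigma * mlump_s N X p.2 chi = mlump_s N X F chi) /\
    (forall eta : @vecfun R NC N, inVPhi N closed ic rho gradPhi X eta ->
       mlump_v N X (svmul N p.2 (omegaM_fun N closed gradPhi X)) eta + stiff N X p.1 eta
       = - stiff N X X eta).
Proof. by apply: main_sec. Qed.
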